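(* Let $r>0$, and let $(X_i,x_i,d_i)_{i\in\mathbb{Z}^+}$ be pointed metric spaces. Suppose that for each $i$ the $r$-neighborhood $U_i=\{y\in X_i: d_i(y,x_i)<r\}$ admits a strong deformation contraction $R_i$ to $x_i$, where $U_i$ is equipped with the restricted metric $d_i$. Then for every pointed compact space $(K,k_0)$, the natural continuous bijection $\bigvee_{\mathbb{Z}^+}X_i\to\bigvee^m_{\mathbb{Z}^+}X_i$ induces a bijection between the sets of pointed homotopy classes of pointed maps $[K,\bigvee_{\mathbb{Z}^+}X_i]$ and $[K,\bigvee^m_{\mathbb{Z}^+}X_i]$.
   Context: Let $I=[0,1]$. A strong deformation contraction of a pointed metric space $(X,x_0,d)$ to $x_0$ is a continuous map $H\colon X\times I\to X$ such that: (1) $H(x,0)=x$ for all $x$; (2) $H(X\times\{1\})=H(\{x_0\}\times I)=\{x_0\}$; (3) $d(H(x,t),H(y,t))\le d(x,y)$ for all $x,y\in X$ and all $t\in I$. The weak wedge $\bigvee_{\mathbb{Z}^+}X_i$ is the quotient space of the disjoint union of the $X_i$ obtained by identifying all the points $x_i$. It is based at the wedge point. The metric wedge $\bigvee^m_{\mathbb{Z}^+}X_i$ is the same set, based at the wedge point, with the metric $d_\vee$ given by: - $d_\vee(x,y)=d_j(x,y)$ if $x,y\in X_j$ for some $j$; - $d_\vee(x,y)=d_j(x,x_j)+d_k(y,x_k)$ if $x\in X_j$, $y\in X_k$ with $j\ne k$. *)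

(* Defs.v *)
From HB Require Import structures.
From mathcomp Require Import all_boot all_order all_algebra generic_quotient.
From mathcomp Require Import all_classical all_reals topology wedge_sigT.
From mathcomp Require Import lra.

Set Implicit Arguments.
Unset Strict Implicit.
Unset Printing Implicit Defensive.
Import Order.TTheory GRing.Theory Num.Theory.
Import numFieldTopology.Exports.
Local Open Scope classical_set_scope.
Local Open Scope ring_scope.
Local Open Scope quotient_scope.

Section metric_wedge.
Context {R : realType} (X : nat -> metricType R) (x0 : forall i, X i).

Definition sigT_wdist (p q : {i : nat & X i}) : R :=
  if tag p == tag q then mdist (tagged p) (tagged_as p q)
  else mdist (tagged p) (x0 (tag p)) + mdist (tagged q) (x0 (tag q)).

Lemma sigT_wdistE i (u v : X i) :
  sigT_wdist (existT X i u) (existT X i v) = mdist u v.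
Proof. by rewrite /sigT_wdist /= eqxx (@tagged_asE _ X (existT X i u) v). Qed.

Lemma sigT_wdistNE i j (u : X i) (v : X j) : i != j ->
  sigT_wdist (existT X i u) (existT X j v) = mdist u (x0 i) + mdist v (x0 j).
Proof. by move=> ij; rewrite /sigT_wdist /= (negbTE ij). Qed.

Lemma sigT_wdist_base i q :
  sigT_wdist (existT X i (x0 i)) q = mdist (tagged q) (x0 (tag q)).
Proof.
case: q => j v /=; case: (eqVneq i j) => [eij|ij]; first subst j.
  by rewrite sigT_wdistE metric_sym.
by rewrite sigT_wdistNE // mdistxx add0r.
Qed.

Lemma sigT_wdist_sym p q : sigT_wdist p q = sigT_wdist q p.
Proof.
case: p q => i u [j v]; case: (eqVneq i j) => [eij|ij]; first subst j.
  by rewrite !sigT_wdistE metric_sym.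
rewrite sigT_wdistNE // sigT_wdistNE 1?eq_sym //; exact: addrC.
Qed.

Lemma sigT_wdist_ge0 p q : 0 <= sigT_wdist p q.
Proof.
case: p q => i u [j v]; case: (eqVneq i j) => [eij|ij]; first subst j.
  by rewrite sigT_wdistE mdist_ge0.
by rewrite sigT_wdistNE // addr_ge0 // mdist_ge0.
Qed.

Lemma sigT_wdist_compat p p' q : wedge_rel x0 p p' ->
  sigT_wdist p q = sigT_wdist p' q.
Proof.
case/orP => [/eqP -> //|/andP [/eqP hp /eqP hp']].
case: p hp => i u /= ->; case: p' hp' => j v /= ->.
by rewrite !sigT_wdist_base.
Qed.

Lemma sigT_wdist_triangle p q s :
  sigT_wdist p s <= sigT_wdist p q + sigT_wdist q s.
Proof.
case: p q s => i u [j v] [k w].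
have h0 := @mdist_ge0 R.
case: (eqVneq i j) => [eij|ij]; case: (eqVneq i k) => [eik|ik]; try subst j; try subst k.
- by rewrite !sigT_wdistE metric_triangle.
- rewrite sigT_wdistE !sigT_wdistNE //.
  have := metric_triangle u v (x0 i); have := h0 _ u v; lra.
- rewrite sigT_wdistE sigT_wdistNE // sigT_wdistNE 1?eq_sym //.
  have := metric_triangle u (x0 i) w.
  rewrite (metric_sym w); have := h0 _ v (x0 j); lra.
- case: (eqVneq j k) => [jk|jk].
    subst k; rewrite sigT_wdistE !sigT_wdistNE //.
    have := metric_triangle w v (x0 j); rewrite (metric_sym w v).
    have := h0 _ u (x0 i); lra.
  rewrite !sigT_wdistNE //.
  have := h0 _ v (x0 j); have := h0 _ u (x0 i); have := h0 _ w (x0 k); lra.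
Qed.

Lemma sigT_wdist_eq0 p q : sigT_wdist p q = 0 -> wedge_rel x0 p q.
Proof.
case: p q => i u [j v]; case: (eqVneq i j) => [eij|ij]; first subst j.
  by rewrite sigT_wdistE => /mdist_positivity ->; apply/orP; left.
rewrite sigT_wdistNE // => /eqP; rewrite paddr_eq0 ?mdist_ge0 //.
case/andP => /eqP/mdist_positivity hu /eqP/mdist_positivity hv.
by apply/orP; right; rewrite /= hu hv !eqxx.
Qed.

Definition mwedge := wedge x0.
HB.instance Definition _ := Choice.on mwedge.

Definition wedge_dist (a b : mwedge) : R := sigT_wdist (repr a) (repr b).

Lemma wedge_distE p q :
  wedge_dist (\pi_(wedge x0) p) (\pi_(wedge x0) q) = sigT_wdist p q.
Proof.
rewrite /wedge_dist.
have hp : wedge_rel x0 (repr (\pi_(wedge x0) p)) p.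
  by apply/eqmodP; rewrite reprK.
have hq : wedge_rel x0 (repr (\pi_(wedge x0) q)) q.
  by apply/eqmodP; rewrite reprK.
rewrite (sigT_wdist_compat _ hp) sigT_wdist_sym (sigT_wdist_compat _ hq).
by rewrite sigT_wdist_sym.
Qed.

Lemma wedge_distxx a : wedge_dist a a = 0.
Proof.
by rewrite /wedge_dist; case: (repr a) => i u; rewrite sigT_wdistE mdistxx.
Qed.

Lemma wedge_dist_sym a b : wedge_dist a b = wedge_dist b a.
Proof. exact: sigT_wdist_sym. Qed.

Lemma wedge_dist_triangle b a c :
  wedge_dist a c <= wedge_dist a b + wedge_dist b c.
Proof. exact: sigT_wdist_triangle. Qed.

Lemma wedge_dist_positivity a b : wedge_dist a b = 0 -> a = b.
Proof.
move=> /sigT_wdist_eq0 h.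
by rewrite -[a]reprK -[b]reprK; apply/eqmodP.
Qed.

HB.instance Definition _ := @isMetric.Build R mwedge wedge_dist
  wedge_distxx wedge_dist_positivity wedge_dist_sym wedge_dist_triangle.

End metric_wedge.

Section wedge_maps.
Context {R : realType} (X : nat -> metricType R) (x0 : forall i, X i).

(** the weak wedge [wedge x0] (quotient topology of the disjoint union) and
    the metric wedge [mwedge x0] have the same underlying set; the natural
    continuous bijection is the identity map *)
Definition wedge_to_mwedge : wedge x0 -> mwedge x0 := fun w => w.

Definition wedge_pt : wedge x0 := wedge_lift x0 (x0 0%N).
Definition mwedge_pt : mwedge x0 := wedge_to_mwedge wedge_pt.

End wedge_maps.
Arguments wedge_to_mwedge {R X} x0 _.
Arguments wedge_pt {R X} x0.
Arguments mwedge_pt {R X} x0.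
Arguments mwedge {R X} x0.

Definition pointed_map (K Y : topologicalType) (k0 : K) (y0 : Y) (f : K -> Y) :=
  continuous f /\ f k0 = y0.

Definition pointed_homotopic {R : realType} (K Y : topologicalType)
    (k0 : K) (y0 : Y) (f g : K -> Y) :=
  exists H : K * R -> Y,
    {within [set p : K * R | 0 <= p.2 <= 1], continuous H} /\
    (forall k, H (k, 0) = f k) /\
    (forall k, H (k, 1) = g k) /\
    (forall t, 0 <= t <= 1 -> H (k0, t) = y0).

(** strong deformation contraction of the pointed metric space (U, x0, d|U),
    where U is a subset of the metric space X containing x0; the homotopy is a
    map U x I -> U, represented as a map X * R -> X whose values matter only
    on U x [0,1] *)
Definition strong_deformation_contraction {R : realType} (X : metricType R)
    (x0 : X) (U : set X) (H : X * R -> X) :=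
  {within [set p : X * R | U p.1 /\ 0 <= p.2 <= 1], continuous H} /\
  (forall x t, U x -> 0 <= t <= 1 -> U (H (x, t))) /\
  (forall x, U x -> H (x, 0) = x) /\
  (forall x, U x -> H (x, 1) = x0) /\
  (forall t, 0 <= t <= 1 -> H (x0, t) = x0) /\
  (forall x y t, U x -> U y -> 0 <= t <= 1 ->
     mdist (H (x, t)) (H (y, t)) <= mdist x y).

(* Main.v *)
Require Import Defs.
From HB Require Import structures.
From mathcomp Require Import all_boot all_order all_algebra generic_quotient.
From mathcomp Require Import all_classical all_reals topology wedge_sigT.
From mathcomp Require Import normedtype lra finmap.

Import Order.TTheory GRing.Theory Num.Theory.
Import numFieldTopology.Exports numFieldNormedType.Exports.
Local Open Scope classical_set_scope.
Local Open Scope ring_scope.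
Local Open Scope quotient_scope.
Set Implicit Arguments.
Unset Strict Implicit.

Section basic.
Context {R : realType} (X : nat -> metricType R) (x0 : forall i, X i).

Local Notation W := (wedge x0).
Local Notation M := (mwedge x0).
Local Notation base := (mwedge_pt x0).

Definition ml i (u : X i) : M := wedge_lift x0 u.

Lemma ml_base i : ml (x0 i) = base.
Proof. rewrite /ml /mwedge_pt /wedge_to_mwedge /wedge_pt. exact: (wedge_liftE x0 (x0 0%N) (x0 i)). Qed.

Lemma mlP (m : M) : exists i (u : X i), m = ml u.
Proof.
case E: (repr m) => [i u]; exists i, u.
by rewrite /ml /wedge_lift /= -E reprK.
Qed.

Lemma md_same i (u v : X i) : mdist (ml u) (ml v) = mdist u v.
Proof.
exact: (etrans (wedge_distE x0 (existT _ i u) (existT _ i v)) (sigT_wdistE x0 u v)).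
Qed.

Lemma md_diff i j (u : X i) (v : X j) : i != j ->
  mdist (ml u) (ml v) = mdist u (x0 i) + mdist v (x0 j).
Proof.
move=> ij.
exact: (etrans (wedge_distE x0 (existT _ i u) (existT _ j v)) (sigT_wdistNE x0 u v ij)).
Qed.

Lemma md_base i (u : X i) : mdist (ml u) base = mdist u (x0 i).
Proof. by rewrite -(ml_base i) md_same. Qed.

Lemma ml_inj i (u v : X i) : ml u = ml v -> u = v.
Proof. by move=> e; apply: mdist_positivity; rewrite -md_same e mdistxx. Qed.

Lemma ml_diff i j (u : X i) (v : X j) : i != j -> ml u = ml v ->
  u = x0 i /\ v = x0 j.
Proof.
move=> ij e; have : mdist (ml u) (ml v) = 0 by rewrite e mdistxx.
rewrite md_diff // => /eqP; rewrite paddr_eq0 ?mdist_ge0 //.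
by case/andP => /eqP/mdist_positivity -> /eqP/mdist_positivity ->.
Qed.

Lemma same_idx i (u : X i) (m : M) : mdist (ml u) m < mdist u (x0 i) ->
  exists w : X i, m = ml w.
Proof.
case: (mlP m) => j [w ->]; move: w; case: (eqVneq i j) => [<-|ij] w.
  by exists w.
rewrite md_diff // => h; exfalso; have := mdist_ge0 w (x0 j); lra.
Qed.

Lemma repr_ml i (u : X i) : u != x0 i -> repr (ml u) = existT X i u.
Proof.
move=> nu; have : \pi_W (repr (ml u)) = \pi_W (existT X i u) := reprK _.
move/eqmodP; case/orP => [/eqP //|/andP [_ /eqP /= h]].
by rewrite h eqxx in nu.
Qed.

Lemma repr_base : exists j, repr base = existT X j (x0 j).
Proof.
case E: (repr base) => [j v]; exists j.
have : ml v = ml (x0 j).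
  by rewrite ml_base -[RHS]reprK E.
by move/ml_inj => ->.
Qed.

End basic.

Section metric_helpers.
Context {R : realType}.
Import metricType_numDomainType.

Lemma nbhs_md (Y : metricType R) (x : Y) (A : set Y) :
  nbhs x A -> exists2 e : R, 0 < e & forall y, mdist x y < e -> A y.
Proof. by rewrite -filter_from_mdist_nbhs => -[e e0 h]; exists e. Qed.

Lemma md_nbhs (Y : metricType R) (x : Y) (A : set Y) :
  (exists2 e : R, 0 < e & forall y, mdist x y < e -> A y) -> nbhs x A.
Proof. by rewrite -filter_from_mdist_nbhs => -[e e0 h]; exists e. Qed.

Lemma open_md (Y : metricType R) (A : set Y) :
  (forall x, A x -> exists2 e : R, 0 < e & forall y, mdist x y < e -> A y) ->
  open A.
Proof. by move=> h; rewrite openE => x /h /md_nbhs. Qed.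

Lemma cont_md (T : topologicalType) (Y : metricType R) (h : T -> Y) t :
  (forall e : R, 0 < e -> \forall t' \near t, mdist (h t) (h t') < e) ->
  {for t, continuous h}.
Proof. by move=> H; apply/cvgrPdist_lt. Qed.

Lemma md_cont (T : topologicalType) (Y : metricType R) (h : T -> Y) t :
  {for t, continuous h} ->
  (forall e : R, 0 < e -> \forall t' \near t, mdist (h t) (h t') < e).
Proof. by move=> H; apply/cvgrPdist_lt. Qed.

End metric_helpers.

Definition palias (T : topologicalType) (x : T) : Type := T.
HB.instance Definition _ (T : topologicalType) (x : T) :=
  Topological.on (palias x).
HB.instance Definition _ (T : topologicalType) (x : T) :=
  isPointed.Build (palias x) x.

Lemma compact_cov (T : topologicalType) (x : T) (A : set T) :
  compact A -> cover_compact A.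
Proof.
move=> cA.
have h : @compact (palias x) A -> @cover_compact (palias x) A.
  by rewrite compact_cover.
exact: h.
Qed.

Lemma compact_nat_cover (T : topologicalType) (x : T) (A : set T)
  (O : nat -> set T) : compact A -> (forall n, open (O n)) ->
  (forall n m, (n <= m)%N -> O n `<=` O m) ->
  A `<=` \bigcup_n O n -> exists N, A `<=` O N.
Proof.
move=> /(compact_cov x) cA oO mO cov.
have [D' _ hD] := cA nat [set: nat] O (fun n _ => oO n)
  (fun a Aa => let: ex_intro2 n _ h := cov a Aa in ex_intro2 _ _ n I h).
exists (\max_(n <- (D' : seq nat)) n) => a /hD [n /= nD On].
by apply: (mO n) => //; apply: (@leq_bigmax_seq _ _ xpredT id).
Qed.

Section wedge_top.
Context {R : realType} (X : nat -> metricType R) (x0 : forall i, X i).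

Local Notation W := (wedge x0).
Local Notation M := (mwedge x0).
Local Notation base := (mwedge_pt x0).

Definition toW (m : M) : W := m.

Lemma ml_cont i : continuous (@ml R X x0 i).
Proof.
move=> u; apply: cont_md => e e0; apply: md_nbhs; exists e => // y.
by rewrite md_same.
Qed.

Lemma id_cont : continuous (wedge_to_mwedge x0).
Proof.
have -> : wedge_to_mwedge x0 = wedge_fun (fun i (u : X i) => ml x0 u).
  apply/funext => z; rewrite /wedge_fun /=.
  case E: (repr z) => [i u] /=.
  by rewrite /wedge_to_mwedge -{1}[z]reprK E.
apply: wedge_fun_continuous => [i|i j]; first exact: ml_cont.
by rewrite !ml_base.
Qed.


Lemma toW_cont (T : topologicalType) (h : T -> M) N : continuous h ->
  (forall t, exists i (u : X i), (i <= N)%N /\ h t = ml x0 u) ->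
  continuous (toW \o h).
Proof.
move=> hc hf t U /= hU.
rewrite nbhsE in hU; case: hU => V [oV Vh] VU.
have oVi := (wedge_openP V).1 oV.
suff [e e0 He] : exists2 e : R, 0 < e & forall m : M,
    (exists i (u : X i), (i <= N)%N /\ m = ml x0 u) ->
    mdist (h t) m < e -> V m.
  apply: (filterS _ (md_cont (hc t) e0)) => t' ht'.
  by apply: VU; apply: He => //; exact: hf.
case: (mlP (h t)) => i [u hu].
case: (eqVneq u (x0 i)) => [ub|unb].
  have htb : h t = base by rewrite hu ub ml_base.
  have ej j : exists2 e : R, 0 < e &
      forall y : X j, mdist (x0 j) y < e -> V (ml x0 y).
    apply: nbhs_md; apply: open_nbhs_nbhs; split; first exact: oVi.
    by change (V (ml x0 (x0 j))); rewrite ml_base -htb.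
  have : forall n, exists2 e : R, 0 < e & forall j (y : X j),
      (j <= n)%N -> mdist (x0 j) y < e -> V (ml x0 y).
    elim=> [|n [e e0 He]].
      have [e e0 He] := ej 0%N; exists e => // j y; rewrite leqn0 => /eqP jE.
      by move: y; rewrite jE.
    have [e' e'0 He'] := ej n.+1; exists (Order.min e e'); first by rewrite lt_min e0.
    move=> j y; rewrite leq_eqVlt ltnS => /orP [/eqP jE|jn]; rewrite lt_min => /andP [h1 h2].
      by move: y h1 h2; rewrite jE => y _; apply: He'.
    exact: He.
  case/(_ N) => e e0 He; exists e => // m [j [y [jN ->]]].
  by rewrite htb metric_sym md_base metric_sym; apply: He.
have [e1 e10 He1] : exists2 e : R, 0 < e &
    forall y : X i, mdist u y < e -> V (ml x0 y).
  apply: nbhs_md; apply: open_nbhs_nbhs; split; first exact: oVi.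
  by change (V (ml x0 u)); rewrite -hu.
exists (Order.min e1 (mdist u (x0 i))); first by rewrite lt_min e10 mdist_gt0.
move=> m _; rewrite lt_min hu => /andP [h1 h2].
have [w mw] := same_idx h2; move: h1; rewrite mw md_same; exact: He1.
Qed.


Lemma fin_image (K : topologicalType) (k0 : K) (f : K -> W) :
  compact [set: K] -> continuous f ->
  exists N, forall k, exists i (u : X i), (i <= N)%N /\ f k = ml x0 u.
Proof.
move=> cK fc.
pose P i := exists k (u : X i), u != x0 i /\ f k = ml x0 u.
have hp i : exists q : X i, P i -> q != x0 i /\ exists k, f k = ml x0 q.
  case: (pselect (P i)) => [[k [u [nu fk]]]|nP].
    by exists u => _; split => //; exists k.
  by exists (x0 i) => /nP.
pose p i := sval (cid (hp i)).
have pP i : P i -> p i != x0 i /\ exists k, f k = ml x0 (p i).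
  exact: (svalP (cid (hp i))).
pose O n : set W := [set w | forall i, (n < i)%N -> P i -> w <> ml x0 (p i)].
have oO n : open (O n).
  apply/wedge_openP => j; apply: open_md => y Oy.
  case: (pselect ((n < j)%N /\ P j)) => [[nj Pj]|nPj].
    have ypj : y != p j by apply/eqP => e; apply: (Oy j nj Pj); rewrite e.
    exists (mdist y (p j)); first by rewrite mdist_gt0.
    move=> y' hy' i ni Pi e; have [npi _] := pP i Pi.
    case: (eqVneq j i) => [ji|ji].
      subst i; have := ml_inj e => y'E.
      by move: hy'; rewrite y'E ltxx.
    by have [_ pE] := ml_diff ji e; rewrite pE eqxx in npi.
  exists 1 => // y' _ i ni Pi e; have [npi _] := pP i Pi.
  case: (eqVneq j i) => [ji|ji].
    by subst i; apply: nPj.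
  by have [_ pE] := ml_diff ji e; rewrite pE eqxx in npi.
have [N hN] : exists N, [set: K] `<=` f @^-1` O N.
  apply: (@compact_nat_cover _ k0 _ (fun n => f @^-1` O n) cK).
  - by move=> n; exact: ((continuousP f).1 fc (O n) (oO n)).
  - move=> n m nm w Ow i mi Pi; apply: Ow => //.
    exact: leq_ltn_trans nm mi.
  - move=> k _; case: (mlP (f k)) => i [u fu]; exists i => //.
    move=> i' ii' Pi' e; have [npi _] := pP i' Pi'.
    have ii'' : i != i' by rewrite neq_ltn ii'.
    have [_ pE] := ml_diff ii'' (etrans (esym fu) e).
    by rewrite pE eqxx in npi.
have noP i : (N < i)%N -> ~ P i.
  move=> Ni Pi; have [_ [k' fk']] := pP i Pi.
  exact: (hN k' I i Ni Pi fk').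
exists N => k; case: (mlP (f k)) => i [u fu].
case: (leqP i N) => iN; first by exists i, u.
case: (eqVneq u (x0 i)) => [ub|unb].
  by exists 0%N, (x0 0%N); split => //; rewrite fu ub !ml_base.
by exfalso; apply: (noP i iN); exists k, u.
Qed.

Lemma small_tail (C : set M) (e : R) : compact C -> 0 < e ->
  exists N, forall i, (N < i)%N -> forall u : X i, C (ml x0 u) ->
    mdist u (x0 i) < e.
Proof.
move=> cC e0.
pose O n : set M := [set m | mdist m base < e \/
  exists j (v : X j), [/\ (j <= n)%N, v != x0 j & m = ml x0 v]].
have [N hN] : exists N, C `<=` O N.
  apply: (compact_nat_cover base cC).
  - move=> n; apply: open_md => m [hm|[j [v [jn nv ->]]]].
      exists (e - mdist m base); first by rewrite subr_gt0.
      move=> y hy; left; have := metric_triangle y m base.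
      rewrite (metric_sym y m); lra.
    exists (mdist v (x0 j)); first by rewrite mdist_gt0.
    move=> y hy; right; have [w yw] := same_idx hy.
    exists j, w; split => //; apply/eqP => wb; move: hy.
    by rewrite yw wb md_same ltxx.
  - move=> n m nm w [h|[j [v [jn nv ->]]]]; first by left.
    by right; exists j, v; split => //; exact: leq_trans jn nm.
  - move=> m _; case: (mlP m) => j [v ->]; case: (eqVneq v (x0 j)) => [->|nv].
      by exists 0%N => //; left; rewrite ml_base mdistxx.
    by exists j => //; right; exists j, v.
exists N => i Ni u Cu; case: (hN _ Cu) => [h|[j [v [jN nv e']]]].
  by rewrite -md_base.
have ij : i != j by rewrite neq_ltn (leq_ltn_trans jN Ni) orbT.
by have [-> _] := ml_diff ij e'; rewrite mdistxx.
Qed.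

End wedge_top.

Section dir3.
Context {R : realType} (X : nat -> metricType R) (x0 : forall i, X i).
Local Notation W := (wedge x0).
Local Notation M := (mwedge x0).
Local Notation base := (mwedge_pt x0).

Definition collapse N (m : M) : M :=
  if (N < projT1 (repr m))%N then base else m.

Lemma collapse_ml N i (u : X i) :
  collapse N (ml x0 u) = if (N < i)%N then base else ml x0 u.
Proof.
rewrite /collapse; case: (eqVneq u (x0 i)) => [->|nu].
  by rewrite ml_base; case: ifP; case: ifP.
by rewrite repr_ml.
Qed.

Lemma mdb : mdist base base = 0.
Proof. exact: mdistxx. Qed.

Lemma collapse_base N : collapse N base = base.
Proof. by rewrite /collapse; case: ifP. Qed.

Lemma collapse_cont N : continuous (collapse N).
Proof.
move=> m; apply: cont_md => e e0; apply: md_nbhs.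
case: (mlP m) => i [u ->]; case: (eqVneq u (x0 i)) => [->|nu].
  exists e => // y; rewrite ml_base collapse_base.
  case: (mlP y) => j [w ->] hy; rewrite collapse_ml.
  by case: ifP => _; [rewrite mdb | exact: hy].
exists (Order.min e (mdist u (x0 i))); first by rewrite lt_min e0 mdist_gt0.
move=> y; rewrite lt_min => /andP [h1 h2]; move: h1.
have [w ->] := same_idx h2; rewrite !collapse_ml md_same.
by case: ifP => _; [move=> _; rewrite mdb | rewrite md_same].
Qed.

Lemma collapse_fin N m :
  exists i (u : X i), (i <= N)%N /\ collapse N m = ml x0 u.
Proof.
case: (mlP m) => i [u ->]; rewrite collapse_ml; case: ifPn => [_|].
  by exists 0%N, (x0 0%N); rewrite ml_base.
by rewrite -leqNgt => iN; exists i, u.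
Qed.

Lemma dir3 (K : topologicalType) (k0 : K) (f g : K -> W) :
  compact [set: K] ->
  pointed_map k0 (wedge_pt x0) f -> pointed_map k0 (wedge_pt x0) g ->
  @pointed_homotopic R _ _ k0 (mwedge_pt x0)
    (wedge_to_mwedge x0 \o f) (wedge_to_mwedge x0 \o g) ->
  @pointed_homotopic R _ _ k0 (wedge_pt x0) f g.
Proof.
move=> cK [fc f0] [gc g0] [H [Hc [H0 [H1 Hk]]]].
have [N1 hf] := fin_image k0 cK fc; have [N2 hg] := fin_image k0 cK gc.
pose N := (N1 + N2)%N.
exists (@toW R X x0 \o (collapse N \o H)); split; [|split; [|split]].
- have c1 : {within [set p : K * R | 0 <= p.2 <= 1], continuous (collapse N \o H)}.
    move=> p; exact: (continuous_comp (Hc p) (@collapse_cont N (H p))).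
  have := toW_cont c1 (fun p => collapse_fin N (H p)).
  exact.
- move=> k /=; rewrite H0 /=; have [i [u [iN ->]]] := hf k.
  rewrite /wedge_to_mwedge collapse_ml ifN // -leqNgt.
  exact: leq_trans iN (leq_addr _ _).
- move=> k /=; rewrite H1 /=; have [i [u [iN ->]]] := hg k.
  rewrite /wedge_to_mwedge collapse_ml ifN // -leqNgt.
  exact: leq_trans iN (leq_addl _ _).
- by move=> t ht /=; rewrite Hk // collapse_base.
Qed.

End dir3.

Section dir4.
Context {R : realType} (X : nat -> metricType R) (x0 : forall i, X i).
Local Notation W := (wedge x0).
Local Notation M := (mwedge x0).
Local Notation base := (mwedge_pt x0).
Unset Implicit Arguments.
Variables (r : R) (r0 : 0 < r) (RR : forall i, X i * R -> X i).
Set Implicit Arguments.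
Hypothesis hRR : forall i, strong_deformation_contraction (x0 i)
  [set y | mdist y (x0 i) < r] (RR i).
Variable N : nat.

Definition Psi (t : R) (m : M) : M :=
  match repr m with existT i u =>
    if (N < i)%N then ml x0 (RR i (u, t)) else ml x0 u end.

Lemma RRfix i t : 0 <= t <= 1 -> RR i (x0 i, t) = x0 i.
Proof. by case: (hRR i) => _ [_ [_ [_ [h _]]]]; exact: h. Qed.

Lemma RR0 i (u : X i) : mdist u (x0 i) < r -> RR i (u, 0) = u.
Proof. by case: (hRR i) => _ [_ [h _]]; exact: h. Qed.

Lemma RR1 i (u : X i) : mdist u (x0 i) < r -> RR i (u, 1) = x0 i.
Proof. by case: (hRR i) => _ [_ [_ [h _]]]; exact: h. Qed.

Lemma RRne i (u : X i) t : mdist u (x0 i) < r -> 0 <= t <= 1 ->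
  mdist (RR i (u, t)) (x0 i) <= mdist u (x0 i).
Proof.
move=> hu ht; case: (hRR i) => _ [_ [_ [_ [_ h]]]].
rewrite -{1}(RRfix i ht); apply: h => //=; rewrite mdistxx //.
Qed.

Lemma Psi_ml i (u : X i) t : 0 <= t <= 1 ->
  Psi t (ml x0 u) = if (N < i)%N then ml x0 (RR i (u, t)) else ml x0 u.
Proof.
move=> ht; case: (eqVneq u (x0 i)) => [->|nu].
  rewrite ml_base /Psi; have [j ->] := repr_base x0.
  by rewrite !RRfix // !ml_base !if_same.
by rewrite /Psi repr_ml.
Qed.

Lemma Psi_base t : 0 <= t <= 1 -> Psi t base = base.
Proof. by move=> ht; rewrite -(ml_base x0 0%N) Psi_ml // RRfix // if_same. Qed.

Import metricType_numDomainType.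

Lemma RRcont i (u : X i) (t : R) : mdist u (x0 i) < r -> 0 <= t <= 1 ->
  forall e : R, 0 < e -> exists2 e1 : R, 0 < e1 &
  exists2 BT : set R, nbhs t BT & forall (w : X i) (t' : R), mdist u w < e1 ->
    BT t' -> mdist w (x0 i) < r -> 0 <= t' <= 1 ->
    mdist (RR i (u, t)) (RR i (w, t')) < e.
Proof.
move=> hu ht e e0; have [Hc _] := hRR i.
pose S := [set p : X i * R | mdist p.1 (x0 i) < r /\ 0 <= p.2 <= 1].
have Sut : S (u, t) by [].
have h : RR i @ within S (nbhs (u, t)) --> RR i (u, t).
  by rewrite nbhs_subspace_in //; exact: Hc.
have := cvgr_dist_lt h e0; rewrite near_withinE.
case=> -[B1 B2] /= [hB1 hB2] hB.
have [e1 e10 He1] := nbhs_md hB1; exists e1 => //; exists B2 => //.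
move=> w t' uw Bt' wr ht'; apply: (hB (w, t')) => //; split => //.
exact: He1.
Qed.


Variables (K : topologicalType) (g : K -> M) (gc : continuous g).
Hypothesis hN : forall k i (u : X i), (N < i)%N -> g k = ml x0 u ->
  mdist u (x0 i) < r.

Lemma core k (t : R) : 0 <= t <= 1 -> forall e : R, 0 < e ->
  exists2 B : set K, nbhs k B & exists2 BT : set R, nbhs t BT &
  forall k' (t' : R), B k' -> BT t' -> 0 <= t' <= 1 ->
    mdist (Psi t (g k)) (Psi t' (g k')) < e.
Proof.
move=> ht e e0; case: (mlP (g k)) => i [u gk].
have nb := md_cont (@gc k).
case: (eqVneq u (x0 i)) => [ub|nu].
  have gb : g k = base by rewrite gk ub ml_base.
  exists [set k' | mdist (g k) (g k') < e]; first exact: nb.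
  exists setT; first exact: filterT.
  move=> k' t' hk' _ ht'; rewrite gb Psi_base // in hk' *.
  case: (mlP (g k')) hk' => j [w gk'] hk'; rewrite gk' in hk' *.
  rewrite Psi_ml //; apply: le_lt_trans hk'.
  rewrite gk' ![mdist base _]metric_sym.
  case: ifP => Nj; last exact: lexx.
  rewrite !md_base; apply: RRne => //; exact: hN Nj gk'.
case: (ltnP N i) => Ni.
  have ur : mdist u (x0 i) < r := hN Ni gk.
  have [e1 e10 [BT hBT H]] := RRcont ur ht e0.
  exists [set k' | mdist (g k) (g k') < Order.min e1 (mdist u (x0 i))].
    by apply: nb; rewrite lt_min e10 mdist_gt0.
  exists BT => // k' t' hk' Bt' ht'.
  move: hk' => /=; rewrite gk lt_min => /andP [h1 h2].
  have [w gw] := same_idx h2; rewrite gw md_same in h1.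
  rewrite gw !Psi_ml // Ni md_same.
  by apply: H => //; exact: hN Ni gw.
exists [set k' | mdist (g k) (g k') < Order.min e (mdist u (x0 i))].
  by apply: nb; rewrite lt_min e0 mdist_gt0.
exists setT; first exact: filterT.
move=> k' t' hk' _ ht'.
move: hk' => /=; rewrite gk lt_min => /andP [h1 h2].
have [w gw] := same_idx h2; rewrite gw md_same in h1.
have nNi : ~~ (N < i)%N by rewrite -leqNgt.
by rewrite gw !Psi_ml // !(negbTE nNi) md_same.
Qed.


Lemma cvg_1B (s : R) : (fun x : R => 1 - x) @ s --> 1 - s.
Proof. exact: (cvgB (cvg_cst (1 : R)) (@cvg_id _ (nbhs s))). Qed.

Lemma G_cont : {within [set p : K * R | 0 <= p.2 <= 1],
  continuous (fun p : K * R => Psi (1 - p.2) (g p.1))}.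
Proof.
rewrite continuous_subspace_in => p /set_mem Ap.
pose G := fun p : K * R => Psi (1 - p.2) (g p.1).
suff h : G @ within [set p : K * R | 0 <= p.2 <= 1] (nbhs p) --> G p.
  by move: h; rewrite nbhs_subspace_in.
apply/cvgrPdist_lt => e e0; rewrite near_withinE.
case: p Ap => k s /= Ap.
have ht : 0 <= 1 - s <= 1.
  by case/andP: Ap => h1 h2; apply/andP; split; lra.
have [B hB [BT hBT H]] := core k ht e0.
have hs : nbhs s [set s' | BT (1 - s')] := cvg_1B hBT.
exists (B, [set s' | BT (1 - s')]) => //= -[k' s'] /= [Bk' Bs'] As'.
rewrite /G /=; apply: H => //; case/andP: As' => h1 h2; apply/andP; split; lra.
Qed.

End dir4.

Lemma dir4 (R : realType) (X : nat -> metricType R)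
    (x0 : forall i, X i) (r : R) :
  0 < r ->
  (forall i, exists Ri : X i * R -> X i,
     strong_deformation_contraction (x0 i) [set y | mdist y (x0 i) < r] Ri) ->
  forall (K : topologicalType) (k0 : K), compact [set: K] ->
  forall g : K -> mwedge x0, pointed_map k0 (mwedge_pt x0) g ->
         exists2 f : K -> wedge x0, pointed_map k0 (wedge_pt x0) f &
           @pointed_homotopic R _ _ k0 (mwedge_pt x0)
             (wedge_to_mwedge x0 \o f) g.
Proof.
move=> r0 hR K k0 cK g [gc g0].
pose RR i := sval (cid (hR i)).
have hRR i : strong_deformation_contraction (x0 i)
    [set y | mdist y (x0 i) < r] (RR i) := svalP (cid (hR i)).
have cC : compact [set g x | x in [set: K]].
  exact: (continuous_compact (continuous_subspaceT gc) cK).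
have [N hN0] := small_tail cC r0.
have hN : forall k i (u : X i), (N < i)%N -> g k = ml x0 u ->
    mdist u (x0 i) < r.
  by move=> k i u Ni gk; apply: (hN0 i Ni u); exists k.
have h01 : (0 : R) <= 1 <= (1 : R) by apply/andP; split; lra.
have h00 : (0 : R) <= 0 <= (1 : R) by apply/andP; split; lra.
exists (@toW R X x0 \o (Psi RR N 1 \o g)).
  split; last by rewrite /= g0 (Psi_base hRR N).
  apply: (toW_cont (N := N)).
    move=> k; apply: cont_md => e e0.
    have [B hB [BT hBT H]] := core r0 hRR gc hN k h01 e0.
    apply: filterS hB => k' Bk'; apply: H => //; exact: nbhs_singleton hBT.
  move=> k; case: (mlP (g k)) => i [u gk]; rewrite /= gk (Psi_ml hRR N) //.
  case: ifP => Ni.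
    exists 0%N, (x0 0%N); split => //; rewrite (RR1 hRR) ?ml_base //.
    exact: hN Ni gk.
  by exists i, u; split => //; rewrite leqNgt Ni.
exists (fun p : K * R => Psi RR N (1 - p.2) (g p.1)); split.
  exact: (G_cont r0 hRR gc hN).
split; first by move=> k /=; rewrite subr0.
split.
  move=> k /=; rewrite subrr; case: (mlP (g k)) => i [u gk].
  rewrite gk (Psi_ml hRR N) //; case: ifP => // Ni.
  by rewrite (RR0 hRR) //; exact: hN Ni gk.
move=> t ht /=; rewrite g0 (Psi_base hRR N) //.
by case/andP: ht => h1 h2; apply/andP; split; lra.
Qed.

Theorem mainTheorem7 (R : realType) (X : nat -> metricType R)
    (x0 : forall i, X i) (r : R) :
  0 < r ->
  (forall i, exists Ri : X i * R -> X i,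
     strong_deformation_contraction (x0 i) [set y | mdist y (x0 i) < r] Ri) ->
  forall (K : topologicalType) (k0 : K), compact [set: K] ->
  [/\ (forall f : K -> wedge x0, pointed_map k0 (wedge_pt x0) f ->
         pointed_map k0 (mwedge_pt x0) (wedge_to_mwedge x0 \o f)),
      (forall f g : K -> wedge x0,
         pointed_map k0 (wedge_pt x0) f -> pointed_map k0 (wedge_pt x0) g ->
         @pointed_homotopic R _ _ k0 (wedge_pt x0) f g ->
         @pointed_homotopic R _ _ k0 (mwedge_pt x0)
           (wedge_to_mwedge x0 \o f) (wedge_to_mwedge x0 \o g)),
      (forall f g : K -> wedge x0,
         pointed_map k0 (wedge_pt x0) f -> pointed_map k0 (wedge_pt x0) g ->
         @pointed_homotopic R _ _ k0 (mwedge_pt x0)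
           (wedge_to_mwedge x0 \o f) (wedge_to_mwedge x0 \o g) ->
         @pointed_homotopic R _ _ k0 (wedge_pt x0) f g) &
      (forall g : K -> mwedge x0, pointed_map k0 (mwedge_pt x0) g ->
         exists2 f : K -> wedge x0, pointed_map k0 (wedge_pt x0) f &
           @pointed_homotopic R _ _ k0 (mwedge_pt x0)
             (wedge_to_mwedge x0 \o f) g)].
Proof.
move=> r0 hR K k0 cK; split.
- move=> f [fc f0]; split; last by rewrite /= f0.
  by move=> k; exact: (continuous_comp (@fc k) (@id_cont R X x0 (f k))).
- move=> f g _ _ [H [Hc [H0 [H1 Hk]]]].
  exists (wedge_to_mwedge x0 \o H); split.
    by move=> p; exact: (continuous_comp (Hc p) (@id_cont R X x0 (H p))).
  split; first by move=> k /=; rewrite H0.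
  split; first by move=> k /=; rewrite H1.
  by move=> t ht /=; rewrite Hk.
- by move=> f g; exact: dir3.
- move=> g hg; exact: (@dir4 R X x0 r r0 hR K k0 cK g hg).
Qed.
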